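(* Let $0<\alpha<1$ and $p,q>0$. If $G_{\alpha,p}(A,B)\le_\lambda\mathcal{A}_{\alpha,q}(A,B)$ holds for all positive definite $2\times2$ matrices $A,B$, then $p\le q$.
   Context: For positive definite $A,B$: $A\#_\alpha B:=A^{1/2}(A^{-1/2}BA^{-1/2})^\alpha A^{1/2}$, $G_{\alpha,p}(A,B):=(A^p\#_\alpha B^p)^{1/p}$, $\mathcal{A}_{\alpha,q}(A,B):=((1-\alpha)A^q+\alpha B^q)^{1/q}$. For positive semidefinite $n\times n$ matrices $X,Y$ with eigenvalues listed in decreasing order with multiplicities $\lambda_1(\cdot)\ge\dots\ge\lambda_n(\cdot)$, $X\le_\lambda Y$ means $\lambda_i(X)\le\lambda_i(Y)$ for all $i$. *)

(* Defs.v *)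
From mathcomp Require Import all_boot all_order all_algebra.
From mathcomp Require Import sesquilinear spectral complex.
From mathcomp Require Import reals exp.

Set Implicit Arguments.
Unset Strict Implicit.
Unset Printing Implicit Defensive.

Import Order.TTheory GRing.Theory Num.Theory.
Local Open Scope ring_scope.
Local Open Scope sesquilinear_scope.

Section MatrixMeans.
Variable R : realType.
Local Notation C := R[i].

Definition posdef n (A : 'M[C]_n) : Prop :=
  A \is hermsymmx /\
  forall v : 'rV[C]_n, v != 0 -> 0 < (v *m A *m v ^t*) 0 0.

(* Real power A^t of a positive definite matrix, via the spectral
   decomposition A = P^-1 diag(d) P (P unitary) of the library:
   A^t := P^-1 diag(d_i^t) P.  (d_i are real and > 0 for A posdef.) *)
Definition mpow n (A : 'M[C]_n) (t : R) : 'M[C]_n :=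
  invmx (spectralmx A) *m
  diag_mx (map_mx (fun z : C => ((complex.Re z) `^ t)%:C%C) (spectral_diag A)) *m
  spectralmx A.

Definition wgmean n (alpha : R) (A B : 'M[C]_n) : 'M[C]_n :=
  mpow A (2^-1) *m
  mpow (mpow A (- 2^-1) *m B *m mpow A (- 2^-1)) alpha *m
  mpow A (2^-1).

Definition Gmean n (alpha p : R) (A B : 'M[C]_n) : 'M[C]_n :=
  mpow (wgmean alpha (mpow A p) (mpow B p)) p^-1.

Definition Amean n (alpha q : R) (A B : 'M[C]_n) : 'M[C]_n :=
  mpow (((1 - alpha)%:C)%C *: mpow A q + (alpha%:C)%C *: mpow B q) q^-1.

Definition eigvals_dec n (X : 'M[C]_n) (s : seq R) : Prop :=
  size s = n /\ sorted >=%R s /\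
  char_poly X = \prod_(x <- s) ('X - ((x%:C)%C)%:P).

Definition lambda_le n (X Y : 'M[C]_n) : Prop :=
  exists sX sY : seq R, eigvals_dec X sX /\ eigvals_dec Y sY /\
    forall i : nat, (i < n)%N -> nth 0 sX i <= nth 0 sY i.

End MatrixMeans.

(* Main.v *)
Require Import Defs.
From mathcomp Require Import all_boot all_order all_algebra.
From mathcomp Require Import sesquilinear spectral complex.
From mathcomp Require Import reals exp sequences.
From mathcomp Require Import ring lra.
Import Order.TTheory GRing.Theory Num.Theory.
Local Open Scope ring_scope.
Set Implicit Arguments. Unset Strict Implicit. Unset Printing Implicit Defensive.

Section S.
Variable R : realType.
Local Notation C := R[i].

Definition rm (a b c d : R) : 'M[C]_2 :=
  \matrix_(i < 2, j < 2) (if (i : nat) == 0%N then (if (j : nat) == 0%N then a else b)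
                      else (if (j : nat) == 0%N then c else d))%:C%C.

Lemma rmP (M : 'M[C]_2) a b c d :
  M 0 0 = a%:C%C -> M 0 1 = b%:C%C -> M 1 0 = c%:C%C -> M 1 1 = d%:C%C -> M = rm a b c d.
Proof.
move=> h1 h2 h3 h4; apply/matrixP => i j; rewrite !mxE.
case: i => [[|[|i]] Hi] //; case: j => [[|[|j]] Hj] //=.
- by rewrite -h1; congr (M _ _); apply: val_inj.
- by rewrite -h2; congr (M _ _); apply: val_inj.
- by rewrite -h3; congr (M _ _); apply: val_inj.
- by rewrite -h4; congr (M _ _); apply: val_inj.
Qed.

Lemma rm00 a b c d : rm a b c d 0 0 = a%:C%C. Proof. by rewrite mxE. Qed.
Lemma rm01 a b c d : rm a b c d 0 1 = b%:C%C. Proof. by rewrite mxE. Qed.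
Lemma rm10 a b c d : rm a b c d 1 0 = c%:C%C. Proof. by rewrite mxE. Qed.
Lemma rm11 a b c d : rm a b c d 1 1 = d%:C%C. Proof. by rewrite mxE. Qed.

Lemma rCD (x y : R) : ((x + y)%:C = x%:C + y%:C)%C. Proof. by rewrite -!complexr0; apply/eqP; rewrite eq_complex /= addr0 !eqxx. Qed.
Lemma rCM (x y : R) : ((x * y)%:C = x%:C * y%:C)%C.
Proof. by apply/eqP; rewrite eq_complex /= !mulr0 !mul0r subr0 addr0 !eqxx. Qed.

Lemma rm_mul a b c d e f g h :
  rm a b c d *m rm e f g h = rm (a*e + b*g) (a*f+b*h) (c*e+d*g) (c*f+d*h).
Proof.
apply: rmP; rewrite mxE !big_ord_recl big_ord0 addr0 !mxE /= ?rCD ?rCM //.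
Qed.

Lemma rCN (x : R) : ((- x)%:C = - x%:C)%C.
Proof. by apply/eqP; rewrite eq_complex /= oppr0 !eqxx. Qed.
Lemma rCB (x y : R) : ((x - y)%:C = x%:C - y%:C)%C. Proof. by rewrite rCD rCN. Qed.

Lemma rm_add a b c d e f g h :
  rm a b c d + rm e f g h = rm (a+e) (b+f) (c+g) (d+h).
Proof. by apply: rmP; rewrite !mxE /= rCD. Qed.

Lemma rm_scale x a b c d : (x%:C)%C *: rm a b c d = rm (x*a) (x*b) (x*c) (x*d).
Proof. by apply: rmP; rewrite !mxE /= rCM. Qed.

Lemma rm_scalar x : ((x%:C)%C)%:M = rm x 0 0 x :> 'M[C]_2.
Proof. by apply: rmP; rewrite !mxE /=. Qed.

Lemma rm1 : 1%:M = rm 1 0 0 1 :> 'M[C]_2.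
Proof. by apply: rmP; rewrite !mxE /=. Qed.

Lemma rm_det a b c d : \det (rm a b c d) = ((a * d - b * c)%:C)%C.
Proof.
rewrite (expand_det_row _ 0) !big_ord_recl big_ord0 addr0.
rewrite /cofactor !det_mx11 !mxE /= /bump /= expr0 expr1 rCB !rCM; ring.
Qed.

Lemma rm_tr a b c d : \tr (rm a b c d) = ((a + d)%:C)%C.
Proof. by rewrite /mxtrace !big_ord_recl big_ord0 addr0 !mxE /= rCD. Qed.

Lemma rm_herm a b d : rm a b b d \is hermsymmx.
Proof.
apply/is_hermitianmxP; rewrite expr0 scale1r; apply/esym/rmP; rewrite !mxE /=;
  exact: conjc_real.
Qed.

Lemma mpow_interp (H : 'M[C]_2) t (x1 x2 a b : R) :
  H \is hermsymmx ->
  (H - (x1%:C)%C%:M) *m (H - (x2%:C)%C%:M) = 0 ->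
  a + b * x1 = x1 `^ t -> a + b * x2 = x2 `^ t ->
  mpow H t = (a%:C)%C%:M + (b%:C)%C *: H.
Proof.
move=> hH hCH h1 h2.
have /hermitian_normalmx/orthomx_spectralP HE := hH.
have Pu := spectral_unit H.
rewrite /mpow; move: HE Pu; generalize (spectralmx H) (spectral_diag H) => P d HE Pu.
have conj_sc (x : C) : P *m (x%:M) *m invmx P = x%:M.
  by rewrite mul_mx_scalar -scalemxAl mulmxV // scalemx1.
have DE : P *m H *m invmx P = diag_mx d.
  by rewrite HE !mulmxA mulmxV // mul1mx -mulmxA mulmxV // mulmx1.
have Dx (x : C) : diag_mx d - x%:M = P *m (H - x%:M) *m invmx P.
  by rewrite mulmxBr mulmxBl DE conj_sc.
have Z : (diag_mx d - (x1%:C)%C%:M) *m (diag_mx d - (x2%:C)%C%:M) = 0.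
  by rewrite !Dx !mulmxA mulmxKV // -(mulmxA P) hCH mulmx0 mul0mx.
have dj j : d 0 j = (x1%:C)%C \/ d 0 j = (x2%:C)%C.
  move/matrixP: Z => /(_ j j); rewrite !mxE big_ord_recl big_ord_recl big_ord0 addr0.
  have Hd : forall j k : 'I_2, (diag_mx d - (x1%:C)%C%:M) j k = (d 0 j - (x1%:C)%C) *+ (j == k).
    by move=> j' k; rewrite !mxE mulrnBl.
  have Hd2 : forall j k : 'I_2, (diag_mx d - (x2%:C)%C%:M) j k = (d 0 j - (x2%:C)%C) *+ (j == k).
    by move=> j' k; rewrite !mxE mulrnBl.
  rewrite !Hd !Hd2.
  case: j => [[|[|j]] Hj] //=; rewrite /= ?mulr1n ?mulr0n ?mul0r ?mulr0 ?addr0 ?add0r.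
  - have -> : Ordinal Hj = ord0 by apply: val_inj.
    move/eqP; rewrite mulf_eq0 !subr_eq0 => /orP[/eqP|/eqP]; by [left|right].
  - have -> : Ordinal Hj = lift ord0 ord0 by apply: val_inj.
    move/eqP; rewrite mulf_eq0 !subr_eq0 => /orP[/eqP|/eqP]; by [left|right].
have Ef : map_mx (fun z : C => ((complex.Re z) `^ t)%:C%C) d = \row_j ((a%:C)%C + (b%:C)%C * d 0 j).
  apply/matrixP => i j; rewrite ord1 !mxE.
  by case: (dj j) => -> /=; rewrite -?h1 -?h2 rCD rCM.
have Ed : diag_mx (\row_j ((a%:C)%C + (b%:C)%C * d 0 j)) = (a%:C)%C%:M + (b%:C)%C *: diag_mx d.
  apply/matrixP => i k; rewrite !mxE; case: eqP => _; 
  by rewrite ?mulr1n ?mulr0n ?mulr0 ?addr0.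
rewrite Ef Ed mulmxDr mulmxDl mul_mx_scalar -scalemxAl mulVmx // scalemx1.
by rewrite -scalemxAr -scalemxAl -HE.
Qed.


Lemma rm_opp a b c d : - rm a b c d = rm (-a) (-b) (-c) (-d).
Proof. by apply: rmP; rewrite !mxE /= rCN. Qed.

Lemma rm_sub a b c d e f g h :
  rm a b c d - rm e f g h = rm (a-e) (b-f) (c-g) (d-h).
Proof. by rewrite rm_opp rm_add. Qed.

Lemma rm0 : 0 = rm 0 0 0 0 :> 'M[C]_2.
Proof. by apply: rmP; rewrite !mxE. Qed.

Lemma rm_CH a b c d x1 x2 : x1 + x2 = a + d -> x1 * x2 = a * d - b * c ->
  (rm a b c d - (x1%:C)%C%:M) *m (rm a b c d - (x2%:C)%C%:M) = 0.
Proof.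
move=> h1 h2; rewrite !rm_scalar !rm_sub rm_mul rm0.
have e2 : x2 = a + d - x1 by lra.
subst x2. congr rm; nra.
Qed.


Lemma posdef_rm (a b d : R) : 0 < a -> 0 < a * d - b ^+ 2 -> posdef (rm a b b d).
Proof.
move=> ha hdet; split; first exact: rm_herm.
move=> v v0.
rewrite !mxE !big_ord_recl !big_ord0 !addr0 !mxE !big_ord_recl !big_ord0 !addr0 !mxE /=.
set x := v 0 0; set y := v 0 (lift ord0 ord0).
have cr (z : R) : ((z%:C)%C)^* = (z%:C)%C := conjc_real z.
have cj : ((a%:C)%C * x + (b%:C)%C * y)^* = (a%:C)%C * x^* + (b%:C)%C * y^*.
  by rewrite rmorphD !rmorphM /= !cr.
have key : (a%:C)%C * ((x * a%:C%C + y * b%:C%C) * x^* + (x * b%:C%C + y * d%:C%C) * y^*)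
  = ((a%:C)%C * x + (b%:C)%C * y) * ((a%:C)%C * x + (b%:C)%C * y)^*
    + ((a * d - b ^+ 2)%:C)%C * (y * y^*).
  rewrite cj rCB rCM expr2 rCM; ring.
have haC : 0 < (a%:C)%C by rewrite ltcR.
rewrite -(pmulr_rgt0 _ haC) key.
have [y0|yn0] := eqVneq y 0.
  have xn0 : x != 0.
    apply: contraNneq v0 => x0; apply/eqP/matrixP => i j; rewrite ord1 !mxE.
    by case: j => [[|[|j]] Hj] //=; [rewrite -x0 | rewrite -y0]; congr (v _ _); apply: val_inj.
  rewrite y0 mul0r mulr0 addr0 mulr0 addr0.
  by rewrite mul_conjC_gt0 mulf_neq0 // lt0r_neq0.
apply: ltr_wpDl; first exact: mul_conjC_ge0.
by apply: mulr_gt0; [rewrite ltcR | rewrite mul_conjC_gt0].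
Qed.


Lemma cp2 (M : 'M[C]_2) (x0 x1 : R) :
  char_poly M = \prod_(x <- [:: x0; x1]) ('X - ((x%:C)%C)%:P) ->
  \tr M = ((x0 + x1)%:C)%C /\ \det M = ((x0 * x1)%:C)%C.
Proof.
rewrite !big_cons big_nil mulr1 => hc.
have e : ('X - ((x0%:C)%C)%:P) * ('X - ((x1%:C)%C)%:P)
   = 'X^2 - ((x0 + x1)%:C)%C *: 'X + (((x0*x1)%:C)%C)%:P :> {poly C}.
  rewrite rCD rCM polyCM scalerDl !mul_polyC -!mul_polyC; ring.
have h1 := char_poly_trace M (isT : (0 < 2)%N).
have h0 := char_poly_det M.
rewrite hc e in h1 h0.
split.
  by move: h1; rewrite !coefE /= sub0r addr0 mulr1 => /oppr_inj.
by move: h0; rewrite !coefE /= mulr0 subr0 add0r sqrrN expr1n mul1r.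
Qed.


Lemma mpow_rm_spec (a b d t : R) : exists x1 x2 a' b' d' : R,
  [/\ x1 + x2 = a + d, x1 * x2 = a * d - b ^+ 2,
      mpow (rm a b b d) t = rm a' b' b' d',
      a' + d' = x1 `^ t + x2 `^ t &
      a' * d' - b' * b' = x1 `^ t * x2 `^ t].
Proof.
set disc := (a - d) ^+ 2 + 4 * b ^+ 2.
have dge : 0 <= disc by rewrite /disc; apply: addr_ge0; [exact: sqr_ge0 | apply: mulr_ge0; [lra | exact: sqr_ge0]].
set s := Num.sqrt disc.
have ss : s ^+ 2 = disc by rewrite sqr_sqrtr.
set x1 := (a + d + s) / 2; set x2 := (a + d - s) / 2.
have hs : x1 + x2 = a + d by rewrite /x1 /x2; field.
have hp : x1 * x2 = a * d - b ^+ 2.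
  rewrite /x1 /x2; have -> : (a + d + s) / 2 * ((a + d - s) / 2) = ((a+d)^+2 - s^+2)/4 by field.
  by rewrite ss /disc; field.
have [al [be [e1 e2]]] : exists al be : R, al + be * x1 = x1 `^ t /\ al + be * x2 = x2 `^ t.
  have [->|ne] := eqVneq x1 x2; first by exists (x2 `^ t), 0; rewrite mul0r addr0.
  have ne' : x1 - x2 != 0 by rewrite subr_eq0.
  exists (x1 `^ t - (x1 `^ t - x2 `^ t) / (x1 - x2) * x1), ((x1 `^ t - x2 `^ t) / (x1 - x2)).
  by split; field.
exists x1; exists x2; exists (al + be * a); exists (be * b); exists (al + be * d); split => //.
- rewrite (mpow_interp (x1:=x1) (x2:=x2) (a:=al) (b:=be)) //; last 2 first.
  + exact: rm_herm.
  + by apply: rm_CH => //; rewrite hp expr2.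
  by rewrite rm_scalar rm_scale rm_add; congr rm; ring.
- rewrite -e1 -e2; have : be * a + be * d = be * x1 + be * x2 by rewrite -!mulrDr hs.
  lra.
- rewrite -e1 -e2.
  have e : x2 = a + d - x1 by lra.
  rewrite e; rewrite e in hp; nra.
Qed.

Lemma eig_unpack (M : 'M[C]_2) s (u v w z g1 g2 : R) : M = rm u v w z ->
  u + z = g1 + g2 -> u * z - v * w = g1 * g2 -> eigvals_dec M s ->
  exists x0 x1, [/\ s = [:: x0; x1], x1 <= x0, x0 + x1 = g1 + g2 & x0 * x1 = g1 * g2].
Proof.
move=> -> htr hdet [hsz [hso hcp]].
case: s hsz hso hcp => [|x0 [|x1 [|? ?]]] //= _ hso hcp.
have [ht hd] := cp2 hcp.
rewrite rm_tr in ht; rewrite rm_det in hd.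
exists x0, x1; split => //.
- by move: hso; rewrite andbT.
- by rewrite -htr; apply: complexI.
- by rewrite -hdet; apply: complexI.
Qed.

Lemma root_pair (x0 x1 g1 g2 : R) : x0 + x1 = g1 + g2 -> x0 * x1 = g1 * g2 ->
  (x1 = g1 \/ x1 = g2) /\ (x1 <= x0 -> x1 <= g1 /\ x1 <= g2).
Proof.
move=> hs hp.
have e : (x1 - g1) * (x1 - g2) = 0.
  have ex0 : x0 = g1 + g2 - x1 by lra.
  rewrite ex0 in hp; nra.
have hor : x1 = g1 \/ x1 = g2.
  move/eqP: e; rewrite mulf_eq0 !subr_eq0 => /orP[/eqP|/eqP]; by [left|right].
split => // hle; case: hor => h; subst x1; split; lra.
Qed.


Lemma interp_ex (x y fx fy : R) : x = y -> fx = fy -> exists a b : R, a + b * x = fx /\ a + b * y = fy.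
Proof. by move=> -> ->; exists fy, 0; rewrite mul0r addr0. Qed.

Lemma mpow_diag (x y t : R) : mpow (rm x 0 0 y) t = rm (x `^ t) 0 0 (y `^ t).
Proof.
have [al [be [e1 e2]]] : exists al be : R, al + be * x = x `^ t /\ al + be * y = y `^ t.
  have [->|ne] := eqVneq x y; first by exists (y `^ t), 0; rewrite mul0r addr0.
  have ne' : x - y != 0 by rewrite subr_eq0.
  exists (x `^ t - (x `^ t - y `^ t) / (x - y) * x); exists ((x `^ t - y `^ t) / (x - y)).
  by split; field.
rewrite (mpow_interp (x1:=x) (x2:=y) (a:=al) (b:=be)) //; last 2 first.
- exact: rm_herm.
- by apply: rm_CH => //; ring.
by rewrite rm_scalar rm_scale rm_add -e1 -e2; congr rm; ring.
Qed.

Definition Bm (s2 m z : R) := rm (1 - (1 - z) * s2) ((1 - z) * m) ((1 - z) * m) (z + (1 - z) * s2).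

Lemma mpow_Bm (s2 m z t : R) : m ^+ 2 = s2 - s2 ^+ 2 -> 0 < z < 1 ->
  mpow (Bm s2 m z) t = Bm s2 m (z `^ t).
Proof.
move=> hm /andP[z0 z1].
have z1' : 1 - z != 0 by apply/eqP; lra.
set k := (1 - z `^ t) / (1 - z).
have hk : k * (1 - z) = 1 - z `^ t by rewrite /k; field.
rewrite /Bm (mpow_interp (x1:=1) (x2:=z) (a:=1 - k) (b:=k)) //; last 4 first.
- exact: rm_herm.
- apply: rm_CH; first by ring.
  rewrite expr2 in hm; nra.
- by rewrite powR1; ring.
- have : k * z = k - (1 - z `^ t) by rewrite -hk; ring.
  lra.
rewrite rm_scalar rm_scale rm_add; congr rm.
- have : k * (1 - (1 - z) * s2) = k - (1 - z `^ t) * s2 by rewrite -hk; ring.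
  lra.
- by rewrite add0r mulrA hk.
- by rewrite add0r mulrA hk.
- have : k * (z + (1 - z) * s2) = k * z + (1 - z `^ t) * s2 by rewrite -hk; ring.
  have : k * z = k - (1 - z `^ t) by rewrite -hk; ring.
  lra.
Qed.


Lemma pw1 (t : R) : 1 `^ t = 1. Proof. by rewrite powR1. Qed.

Lemma G_spec (al p δ a0 s2 m σ : R) :
  0 < al < 1 -> 0 < p -> 0 < δ < 1 -> 0 < a0 < 1 -> a0 `^ p = δ ->
  m ^+ 2 = s2 - s2 ^+ 2 -> s2 = σ * δ -> σ * (1 - δ) ^+ 2 = 9 / 4 ->
  exists x1 x2 a' b' d' : R,
  [/\ x1 + x2 = (4 `^ al + 4 * (4^-1) `^ al) / 5 * (1 + δ), x1 * x2 = δ,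
      Gmean al p (rm 1 0 0 a0) (Bm s2 m a0) = rm a' b' b' d',
      a' + d' = x1 `^ (p^-1) + x2 `^ (p^-1) &
      a' * d' - b' * b' = x1 `^ (p^-1) * x2 `^ (p^-1)].
Proof.
move=> /andP[al0 al1] p0 /andP[d0 d1] /andP[a00 a01] hap hm hs hσ.
rewrite /Gmean /wgmean mpow_diag pw1 hap mpow_Bm ?a00 ?a01 // hap !mpow_diag !pw1.
set e := δ `^ (2^-1); set e' := δ `^ (- 2^-1).
have e0 : 0 < e by apply: powR_gt0.
have ee : e' = e^-1 by rewrite /e' powRN.
have e2 : e * e = δ.
  rewrite /e -powRD; last by apply/implyP => _; apply/lt0r_neq0.
  have -> : (2^-1 + 2^-1 : R) = 1 by lra.
  by rewrite powRr1 // ltW.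
set n00 := 1 - (1 - δ) * s2; set n01 := (1 - δ) * m * e'; set n11 := (δ + (1 - δ) * s2) * e' ^+ 2.
have NE : rm 1 0 0 e' *m Bm s2 m δ *m rm 1 0 0 e' = rm n00 n01 n01 n11.
  by rewrite /Bm !rm_mul; congr rm; rewrite /n00 /n01 /n11; ring.
rewrite NE.
have ed : e' ^+ 2 * δ = 1 by rewrite ee -e2; field; apply/lt0r_neq0.
have tr : n00 + n11 = 4 + 4^-1.
  rewrite /n00 /n11 hs.
  have -> : (δ + (1 - δ) * (σ * δ)) * e' ^+ 2 = (1 + (1-δ)*σ) * (e'^+2 * δ) by ring.
  rewrite ed mulr1.
  have -> : 1 - (1-δ)*(σ*δ) + (1 + (1-δ)*σ) = 2 + σ*(1-δ)^+2 by ring.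
  rewrite hσ; lra.
have dt : 4 * 4^-1 = n00 * n11 - n01 * n01.
  have -> : n00*n11 - n01*n01 = ((1 - (1-δ)*s2)*(δ + (1-δ)*s2) - (1-δ)^+2 * m^+2) * e'^+2.
    by rewrite /n00 /n01 /n11; ring.
  rewrite hm.
  have -> : (1 - (1-δ)*s2)*(δ + (1-δ)*s2) - (1-δ)^+2 * (s2 - s2^+2) = δ by ring.
  by rewrite [δ * _]mulrC ed mulfV // pnatr_eq0.
set t4 := 4 `^ al; set u4 := (4^-1) `^ al.
set c1 := (t4 - u4) / (4 - 4^-1); set c0 := t4 - 4 * c1.
rewrite (mpow_interp (H := rm n00 n01 n01 n11) (x1:=4) (x2:=4^-1) (a:=c0) (b:=c1)); last 4 first.
- exact: rm_herm.
- exact: rm_CH.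
- by rewrite /c0 /t4; ring.
- by rewrite /c0 /c1 /t4 /u4; field.
rewrite rm_scalar rm_scale rm_add !rm_mul.
set W00 := c0 + c1 * n00; set W01 := c1 * n01 * e; set W11 := (c0 + c1 * n11) * (e * e).
have [x1 [x2 [a' [b' [d' [h1 h2 h3 h4 h5]]]]]] := mpow_rm_spec W00 W01 W11 (p^-1).
exists x1; exists x2; exists a'; exists b'; exists d'; split => //.
- rewrite h1 /W00 /W11 e2.
  have hn : n11 * δ = δ + (1 - δ) * s2 by rewrite /n11 -mulrA ed mulr1.
  have -> : (c0 + c1 * n11) * δ = c0 * δ + c1 * (n11 * δ) by ring.
  by rewrite hn /n00 /c0 /c1 /t4 /u4; field.
- rewrite h2 /W00 /W01 /W11.
  have -> : (c0 + c1 * n00) * ((c0 + c1 * n11) * (e * e)) - c1 * n01 * e * (c1 * n01 * e) ^+ 1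
     = (e * e) * (c0 ^+ 2 + c0 * c1 * (n00 + n11) + c1 ^+ 2 * (n00 * n11 - n01 * n01)) by ring.
  rewrite tr -dt e2.
  have -> : c0 ^+ 2 + c0 * c1 * (4 + 4^-1) + c1 ^+ 2 * (4 * 4^-1) = t4 * u4 by rewrite /c0 /c1; field.
  rewrite /t4 /u4 -powRM ?mulfV ?pw1 ?mulr1 //; lra.
- by rewrite -h3 /W00 /W01 /W11; congr mpow; congr rm; ring.
Qed.


Lemma A_spec (al q a0 s2 m : R) : 0 < al < 1 -> 0 < a0 < 1 ->
  m ^+ 2 = s2 - s2 ^+ 2 -> 0 <= s2 < 1 ->
  exists y1 y2 a' b' d' : R,
  [/\ 0 < y1 /\ 0 < y2, y1 <= a0 `^ q + s2 \/ y2 <= a0 `^ q + s2,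
      Amean al q (rm 1 0 0 a0) (Bm s2 m a0) = rm a' b' b' d',
      a' + d' = y1 `^ (q^-1) + y2 `^ (q^-1) &
      a' * d' - b' * b' = y1 `^ (q^-1) * y2 `^ (q^-1)].
Proof.
move=> /andP[al0 al1] ha hm /andP[s0 s1].
rewrite /Amean mpow_diag pw1 mpow_Bm //.
set dq := a0 `^ q.
have dq0 : 0 < dq by apply: powR_gt0; case/andP: ha.
rewrite /Bm !rm_scale rm_add.
set b0 := 1 - (1 - dq) * s2; set b1 := (1 - dq) * m; set b2 := dq + (1 - dq) * s2.
set M00 := (1 - al) * 1 + al * b0; set M01 := al * b1; set M11 := (1 - al) * dq + al * b2.
have [y1 [y2 [a' [b' [d' [h1 h2 h3 h4 h5]]]]]] := mpow_rm_spec M00 M01 M11 (q^-1).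
exists y1; exists y2; exists a'; exists b'; exists d'; split => //; last first.
- by rewrite -h3 /M00 /M01 /M11; congr mpow; congr rm; ring.
- have key : (y1 - M11) * (y2 - M11) = - M01 ^+ 2.
    have e : y2 = M00 + M11 - y1 by lra.
    rewrite e in h2 *.
    have -> : (y1 - M11) * (M00 + M11 - y1 - M11) = y1 * (M00 + M11 - y1) - M00 * M11 by ring.
    by rewrite h2; ring.
  have hM : M11 <= dq + s2.
    have : 0 <= s2 * (1 - al + al * dq) by apply: mulr_ge0 => //; nra.
    rewrite /M11 /b2; nra.
  have : (y1 - M11) * (y2 - M11) <= 0 by rewrite key oppr_le0 sqr_ge0.
  move=> hle.
  have [h|h] := lerP y1 M11; first by left; lra.
  right; nra.
- have hb : b0 * b2 - b1 ^+ 2 = dq by rewrite /b0 /b1 /b2 exprMn hm; ring.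
  have b00 : 0 < b0 by rewrite /b0; nra.
  have b20 : 0 < b2 by rewrite /b2; nra.
  have hdet : M00 * M11 - M01 ^+ 2 = (1 - al) ^+ 2 * dq + al * (1 - al) * (b2 + dq * b0) + al ^+ 2 * (b0 * b2 - b1 ^+ 2).
    by rewrite /M00 /M01 /M11; ring.
  rewrite hb in hdet.
  have dpos : 0 < M00 * M11 - M01 ^+ 2.
    rewrite hdet; apply: ltr_wpDr; first by apply: mulr_ge0; [apply: sqr_ge0 | lra].
    apply: ltr_pwDr; first by apply: mulr_gt0; [apply: mulr_gt0; lra | nra].
    apply: mulr_ge0; [apply: sqr_ge0 | lra].
  have tpos : 0 < M00 + M11 by rewrite /M00 /M11; nra.
  rewrite -h2 in dpos; rewrite -h1 in tpos.
  split; nra.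
Qed.


Lemma powRE' (a x : R) : 0 < a -> a `^ x = expR (x * ln a).
Proof. by move=> a0; rewrite /powR gt_eqF. Qed.

End S.


Section S2.
Variable R : realType.

Lemma roots_lb (x1 x2 s d : R) : x1 + x2 = s -> x1 * x2 = d -> 0 < s -> 0 < d ->
  [/\ 0 < x1, 0 < x2, d / s <= x1 & d / s <= x2].
Proof.
move=> hs hd s0 d0.
have x10 : 0 < x1 by nra.
have x20 : 0 < x2 by nra.
split => //; rewrite ler_pdivrMr // -hs -hd; nra.
Qed.

Lemma final_step (p q r T L1 σ E τ : R) : 0 < p -> 0 < q -> q / p = r -> 0 < r ->
  0 < L1 -> σ <= 3 -> 0 < σ -> 0 < E -> E <= r * L1 / 6 -> ln τ <= - L1 ->
  p^-1 * (- T - ln τ) <= q^-1 * (- (r * T) + ln (1 + σ * E)) -> False.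
Proof.
move=> p0 q0 hr r0 L0 s3 s0 E0 Eb hl K.
have l1 := le_ln1Dx (x := σ * E) ltac:(nra).
have K2 : p^-1 * (- T - ln τ) <= q^-1 * (- (r * T) + σ * E).
  apply: le_trans K _; apply: ler_wpM2l; [rewrite invr_ge0; exact: ltW | lra].
have K3 : q * (p^-1 * (- T - ln τ)) <= - (r * T) + σ * E.
  have := ler_wpM2l (ltW q0) K2.
  by rewrite [q * (q^-1 * _)]mulrA mulfV ?mul1r // gt_eqF.
rewrite mulrA hr in K3.
have : r * L1 <= - (r * ln τ) by rewrite -mulrN; apply: ler_wpM2l; [exact: ltW | lra].
have : σ * E <= 3 * E by apply: ler_wpM2r; [exact: ltW | done].
have : 0 < r * L1 by apply: mulr_gt0.
lra.
Qed.

End S2.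

Theorem theorem4p20 (R : realType) (alpha p q : R) :
  0 < alpha < 1 -> 0 < p -> 0 < q ->
  (forall A B : 'M[R[i]]_2, posdef A -> posdef B ->
     lambda_le (Gmean alpha p A B) (Amean alpha q A B)) ->
  p <= q.
Proof.
move=> hal p0 q0 H; rewrite leNgt; apply/negP => hqp.
have /andP[al0 al1] := hal.
set r := q / p.
have r0 : 0 < r by apply: divr_gt0.
have r1 : r < 1 by rewrite ltr_pdivrMr // mul1r.
have hrp : q * p^-1 = r by [].
set t4 := 4 `^ alpha; set u4 := (4^-1) `^ alpha.
have ln4 : 0 < ln (4 : R) by apply: ln_gt0; lra.
have t4u4 : t4 * u4 = 1 by rewrite /t4 /u4 -powRM ?mulfV ?pw1 //; lra.
have t41 : 1 < t4 by rewrite /t4 powRE' ?expR_gt1; [apply: mulr_gt0 | lra].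
have t44 : t4 < 4.
  rewrite /t4 powRE'; last by lra.
  rewrite -[X in _ < X]lnK; last by rewrite posrE; lra.
  by rewrite ltr_expR gtr_pMl.
have u40 : 0 < u4 by rewrite /u4 powR_gt0 //; lra.
set κ := (t4 + 4 * u4) / 5.
have κ0 : 0 < κ by rewrite /κ; lra.
have κ1 : κ < 1.
  have h : 0 < u4 * ((t4 - 1) * (4 - t4)) by apply: mulr_gt0 => //; apply: mulr_gt0; lra.
  have e : u4 * ((t4 - 1) * (4 - t4)) = 5 * (t4 * u4) - t4 * (t4 * u4) - 4 * u4 by ring.
  rewrite e t4u4 in h; rewrite /κ; lra.
set L1 := - ln ((1 + κ) / 2).
have L10 : 0 < L1 by rewrite /L1 oppr_gt0; apply: ln_lt0; lra.
set T := 10 + 6 / ((1 - r) * r * L1) + 2 * κ / (1 - κ).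
have rL : 0 < (1 - r) * r * L1 by apply: mulr_gt0 => //; apply: mulr_gt0; lra.
have T1 : 0 <= 6 / ((1 - r) * r * L1) by apply: divr_ge0; [lra | exact: ltW].
have T2 : 0 <= 2 * κ / (1 - κ) by apply: divr_ge0; lra.
set δ := expR (- T).
have δ0 : 0 < δ := expR_gt0 _.
have δT : δ * (1 + T) <= 1.
  rewrite /δ expRN ler_pdivrMl ?expR_gt0 // mulr1; exact: expR_ge1Dx.
have δ10 : δ <= 1/10.
  have : δ * 10 <= δ * (1 + T) by apply: ler_wpM2l; [exact: ltW | rewrite /T; lra].
  lra.
have κδ : κ * (1 + δ) <= (1 + κ) / 2.
  have h1 : δ * (2 * κ / (1 - κ)) <= 1.
    apply: le_trans δT; apply: ler_wpM2l; [exact: ltW | rewrite /T; lra].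
  have : δ * (2 * κ) <= 1 - κ.
    by move: h1; rewrite mulrA ler_pdivrMr ?subr_gt0 // mul1r.
  lra.
set E := expR (- ((1 - r) * T)).
have E0 : 0 < E := expR_gt0 _.
have Eb : E <= r * L1 / 6.
  have h1 : E * (1 + (1 - r) * T) <= 1.
    rewrite /E expRN ler_pdivrMl ?expR_gt0 // mulr1; exact: expR_ge1Dx.
  have h2 : 6 / (r * L1) <= (1 - r) * T.
    have : 6 / ((1 - r) * r * L1) <= T by rewrite /T; lra.
    have -> : 6 / (r * L1) = (1 - r) * (6 / ((1 - r) * r * L1)).
      field; apply/and3P; split; apply/eqP; lra.
    by move=> h; apply: ler_wpM2l => //; lra.
  have h3 : E * (6 / (r * L1)) <= 1.
    have : E * (6 / (r * L1)) <= E * ((1 - r) * T) by apply: ler_wpM2l => //; exact: ltW.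
    have : 0 <= E * ((1 - r) * T).
      apply: mulr_ge0; first exact: ltW.
      apply: mulr_ge0; [lra | rewrite /T; lra].
    lra.
  have rL0 : 0 < r * L1 by apply: mulr_gt0.
  move: h3; rewrite mulrA ler_pdivrMr // mul1r => h3.
  lra.
have d1 : 1 - δ != 0 by apply/eqP; lra.
set σ := 9 / (4 * (1 - δ) ^+ 2).
have hσ : σ * (1 - δ) ^+ 2 = 9 / 4 by rewrite /σ; field.
have σ3 : σ <= 3.
  rewrite /σ ler_pdivrMr; last by apply: mulr_gt0; [lra | apply: exprn_gt0; lra].
  have : 81/100 <= (1 - δ) ^+ 2 by rewrite expr2; nra.
  lra.
have σ0 : 0 < σ by rewrite /σ; apply: divr_gt0; [lra | apply: mulr_gt0; [lra | apply: exprn_gt0; lra]].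
set s2 := σ * δ.
have s20 : 0 <= s2 by apply: mulr_ge0; apply: ltW.
have s21 : s2 <= 3/10 by rewrite /s2; nra.
set m := Num.sqrt (s2 - s2 ^+ 2).
have hm : m ^+ 2 = s2 - s2 ^+ 2 by rewrite sqr_sqrtr // expr2; nra.
set a0 := δ `^ (p^-1).
have a0E : a0 = expR (- (T / p)) by rewrite /a0 powRE' // /δ expRK; congr expR; rewrite mulrN mulrC.
have a00 : 0 < a0 by rewrite a0E expR_gt0.
have a01 : a0 < 1 by rewrite a0E expR_lt1 oppr_lt0; apply: divr_gt0 => //; rewrite /T; lra.
have hap : a0 `^ p = δ by rewrite /a0 -powRrM mulVf ?powRr1 //; [exact: ltW | lra].
have posA : posdef (rm 1 0 0 a0) by apply: posdef_rm; [lra | rewrite expr2 mulr0 subr0 mul1r].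
have posB : posdef (Bm s2 m a0).
  apply: posdef_rm.
    have : (1 - a0) * s2 <= s2 by apply: ler_piMl => //; lra.
    lra.
  rewrite exprMn hm.
  have -> : (1 - (1 - a0) * s2) * (a0 + (1 - a0) * s2) - (1 - a0) ^+ 2 * (s2 - s2 ^+ 2) = a0 by ring.
  exact: a00.
have δ1 : δ < 1 by apply: le_lt_trans δ10 _; lra.
have hδ : 0 < δ < 1 by rewrite δ0 δ1.
have ha0 : 0 < a0 < 1 by rewrite a00 a01.
have hs2 : 0 <= s2 < 1 by rewrite s20 (le_lt_trans s21) //; lra.
have [sX [sY [hX [hY hcmp]]]] := H _ _ posA posB.
have [x1 [x2 [a' [b' [d' [hx1 hx2 hG htG hdG]]]]]] :=
  G_spec (al:=alpha) (m:=m) (σ:=σ) hal p0 hδ ha0 hap hm erefl hσ.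
have [y1 [y2 [a2 [b2 [d2 [[y10 y20] hyor hA htA hdA]]]]]] :=
  A_spec (al:=alpha) q (a0:=a0) (s2:=s2) (m:=m) hal ha0 hm hs2.
have [X0 [X1 [sXE hX10 hXs hXp]]] := eig_unpack hG htG hdG hX.
have [Y0 [Y1 [sYE hY10 hYs hYp]]] := eig_unpack hA htA hdA hY.
have hXY : X1 <= Y1 by have := hcmp 1%N isT; rewrite sXE sYE.
have [hXr _] := root_pair hXs hXp.
have [_ hYr] := root_pair hYs hYp.
have [hY1 hY2] := hYr hY10.
set τ := κ * (1 + δ).
have τ0 : 0 < τ by rewrite /τ; apply: mulr_gt0 => //; lra.
have [x10 x20 xb1 xb2] := roots_lb (s := τ) hx1 hx2 τ0 δ0.
have dτ0 : 0 < δ / τ by apply: divr_gt0.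
have pi0 : 0 <= p^-1 by rewrite invr_ge0; exact: ltW.
have qi0 : 0 <= q^-1 by rewrite invr_ge0; exact: ltW.
have nn (z : R) : 0 < z -> z \in Num.nneg by move=> z0; rewrite nnegrE; exact: ltW.
have LB : (δ / τ) `^ p^-1 <= X1.
  by case: hXr => ->; apply: ge0_ler_powR => //; apply: nn.
have Sp : 0 < a0 `^ q + s2 := ltr_wpDr s20 (powR_gt0 q a00).
have UB : Y1 <= (a0 `^ q + s2) `^ q^-1.
  case: hyor => hy; [apply: le_trans hY1 _ | apply: le_trans hY2 _];
    by apply: ge0_ler_powR => //; apply: nn.
have K : (δ / τ) `^ p^-1 <= (a0 `^ q + s2) `^ q^-1 by apply: le_trans LB (le_trans hXY UB).
rewrite -ler_ln ?posrE ?powR_gt0 // !ln_powR in K.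
rewrite ln_div ?posrE // /δ expRK in K.
have aq : a0 `^ q + s2 = expR (- (r * T)) * (1 + σ * E).
  rewrite mulrDr mulr1 powRE' // a0E expRK /s2 /δ.
  have -> : q * - (T / p) = - (r * T) by rewrite /r; field; apply/lt0r_neq0.
  congr (_ + _); rewrite mulrCA /E -expRD; congr (_ * expR _); ring.
have σE0 : 0 < σ * E by apply: mulr_gt0.
rewrite aq lnM ?posrE ?expR_gt0 // in K; last by lra.
rewrite expRK in K.
have hlt : ln τ <= - L1.
  rewrite /L1 opprK ler_ln ?posrE //; lra.
exact: (final_step p0 q0 erefl r0 L10 σ3 σ0 E0 Eb hlt K).
Qed.
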